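(* Let $V$ be an $\hbar$-adic nonlocal vertex algebra and $S\subset V$ a subset such that for every positive integer $n$, $\{a+\hbar^nV:a\in S\}$ generates $V/\hbar^nV$ as a nonlocal vertex algebra (over $\mathbb{C}[\hbar]/\hbar^n\mathbb{C}[\hbar]$). Then $\langle S\rangle=V$.
   Context: A $\mathbb{C}[[\hbar]]$-module is topologically free if isomorphic to $V_0[[\hbar]]$ for some vector space $V_0$. An $\hbar$-adic nonlocal vertex algebra is a topologically free $\mathbb{C}[[\hbar]]$-module $V$ with a vector ${\bf 1}$ and a $\mathbb{C}[[\hbar]]$-linear map $Y(\cdot,x):V\to(\mathrm{End}V)[[x^{\pm1}]]$, $Y(v,x)=\sum_nv_nx^{-n-1}$, such that for each $n$ the reduction of $Y(u,x)w$ mod $\hbar^n$ lies in $(V/\hbar^nV)((x))$, $Y({\bf 1},x)=1$, $Y(v,x){\bf 1}\in V[[x]]$ with constant term $v$, and for $u,v,w\in V$ and every $n\ge1$ there is $l\ge0$ with $(z+y)^lY(u,z+y)Y(v,y)w\equiv(z+y)^lY(Y(u,z)v,y)w$ modulo $\hbar^nV[[z^{\pm1},y^{\pm1}]]$; then each $V/\hbar^nV$ is a nonlocal vertex algebra over $\mathbb{C}[\hbar]/(\hbar^n)$. For a submodule $U$, $\overline U$ denotes the $\hbar$-adic closure and $[U]=\{v:\hbar^nv\in U\text{ for some }n\}$. An $\hbar$-adic nonlocal vertex subalgebra is a $\mathbb{C}[[\hbar]]$-submodule $U$ with $[U]=U$, $\overline U=U$, ${\bf 1}\in U$ and $u_mv\in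 U$ for all $u,v\in U$, $m\in\mathbb Z$. $\langle S\rangle$ denotes the smallest $\hbar$-adic nonlocal vertex subalgebra of $V$ containing $S$ (explicitly, $\overline{[\cup_kS^{(k)}]}$ where $S^{(1)}=\mathbb{C}[[\hbar]]{\bf 1}+\mathbb{C}[[\hbar]]S$ and $S^{(k+1)}$ is the $\mathbb{C}[[\hbar]]$-span of $a_mb$, $a,b\in S^{(k)}$, $m\in\mathbb Z$). *)

(* Defs.v *)
(* C := R[i] (complex numbers over a realType R, i.e. a copy
   of the complex field), V0 : a C-vector space, and the topologically free
   C[[h]]-module V is modelled concretely as V0[[h]] = nat -> V0
   (coefficient sequences in powers of h). *)
From HB Require Import structures.
From mathcomp Require Import all_boot all_order all_algebra.
From mathcomp Require Import reals complex.
Set Implicit Arguments. Unset Strict Implicit. Unset Printing Implicit Defensive.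
Import Order.TTheory GRing.Theory Num.Theory.
Local Open Scope ring_scope.

Section HadicNVA.
Variable R : realType.
Local Notation C := (R[i]).
Variable V0 : lmodType C.

(* C[[h]] : formal power series, f k = coefficient of h^k *)
Definition pser := nat -> C.
Definition hser := nat -> V0.

Definition hpow (k : nat) : pser := fun i => if i == k then 1 else 0.

Definition hzero : hser := fun _ => 0.
Definition hadd (u v : hser) : hser := fun k => u k + v k.
Definition hsmul (f : pser) (v : hser) : hser :=
  fun k => \sum_(i < k.+1) f i *: v (k - i)%N.
Definition hscale (c : C) (v : hser) : hser := fun k => c *: v k.
Definition hsum (N : nat) (F : nat -> hser) : hser :=
  fun k => \sum_(i < N) F i k.

(* u = v mod h^n V  (i.e. u - v \in h^n V) *)
Definition eqmod (n : nat) (u v : hser) : Prop :=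
  forall k, (k < n)%N -> u k = v k.

Definition hlinear (f : hser -> hser) : Prop :=
  (forall u v, f (hadd u v) = hadd (f u) (f v)) /\
  (forall a v, f (hsmul a v) = hsmul a (f v)).

Definition binC (p : int) (i : nat) : C :=
  (\prod_(k < i) (p%:~R - k%:R)) / (i`!)%:R.

(* Y m u w := u_m w , i.e. Y(u,x) = sum_m (Y m u) x^{-m-1} *)
Definition vmodes := int -> hser -> hser -> hser.

(* Coefficient of z^p y^q in  Y(u,z+y) Y(v,y) w  (with (z+y)^{-m-1} expanded
   in nonnegative powers of y), truncated to the first N terms of the
   h-adically convergent sum over the power i of y:
   sum_i binom(p+i, i) u_{-p-1-i} v_{i-q-1} w. *)
Definition prod_coef_part (Y : vmodes) (u v w : hser) (p q : int) (N : nat)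
  : hser :=
  hsum N (fun i => hscale (binC (p + i%:Z) i)
                     (Y (- p - 1 - i%:Z) u (Y (i%:Z - q - 1) v w))).

(* Coefficient of z^p y^q in  Y(Y(u,z)v,y) w *)
Definition iter_coef (Y : vmodes) (u v w : hser) (p q : int) : hser :=
  Y (- q - 1) (Y (- p - 1) u v) w.

(* Coefficient of z^a y^b after multiplying a series G by (z+y)^l *)
Definition mul_zy_pow (l : nat) (G : int -> int -> hser) (a b : int) : hser :=
  hsum l.+1 (fun t => hscale ('C(l, t))%:R
                       (G (a - l%:Z + t%:Z) (b - t%:Z))).

Definition is_hNVA (vac : hser) (Y : vmodes) : Prop :=
  (forall m w, hlinear (fun u => Y m u w)) /\
  (forall m u, hlinear (Y m u)) /\
  (* Y(u,x)w mod h^n lies in (V/h^nV)((x)) *)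
  (forall (u w : hser) (n : nat), exists N : int,
      forall m : int, N <= m -> eqmod n (Y m u w) hzero) /\
  (forall m w, Y m vac w = if m == -1 then w else hzero) /\
  (* Y(v,x)1 \in V[[x]] with constant term v *)
  (forall v (m : int), 0 <= m -> Y m v vac = hzero) /\
  (forall v, Y (-1) v vac = v) /\
  (* weak associativity modulo h^n *)
  (forall (u v w : hser) (n : nat), (0 < n)%N -> exists l : nat,
      forall a b : int, exists N : nat, forall N' : nat, (N <= N')%N ->
        eqmod n
          (mul_zy_pow l (fun p q => prod_coef_part Y u v w p q N') a b)
          (mul_zy_pow l (iter_coef Y u v w) a b)).

Definition is_submod (U : hser -> Prop) : Prop :=
  U hzero /\ (forall u v, U u -> U v -> U (hadd u v)) /\
  (forall f u, U u -> U (hsmul f u)).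

Definition is_hsubalg (vac : hser) (Y : vmodes) (U : hser -> Prop) : Prop :=
  is_submod U /\
  (forall (k : nat) v, U (hsmul (hpow k) v) -> U v) /\
  (forall v, (forall n : nat, exists u, U u /\ eqmod n v u) -> U v) /\
  U vac /\
  (forall (m : int) u v, U u -> U v -> U (Y m u v)).

Definition hgen (vac : hser) (Y : vmodes) (S : hser -> Prop) : hser -> Prop :=
  fun v => forall U, is_hsubalg vac Y U -> (forall s, S s -> U s) -> U v.

(* Nonlocal vertex subalgebras of V/h^nV (over C[h]/h^n), represented by their
   preimages in V: subsets of V saturated for congruence mod h^nV. *)
Definition is_subalg_mod (n : nat) (vac : hser) (Y : vmodes)
  (T : hser -> Prop) : Prop :=
  (forall u v, eqmod n u v -> T u -> T v) /\
  is_submod T /\ T vac /\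
  (forall (m : int) u v, T u -> T v -> T (Y m u v)).

Definition generates_mod (n : nat) (vac : hser) (Y : vmodes)
  (S : hser -> Prop) : Prop :=
  forall T, is_subalg_mod n vac Y T -> (forall s, S s -> T s) -> forall v, T v.

End HadicNVA.

(* Main.v *)
Require Import Defs.
From mathcomp Require Import all_boot all_order all_algebra.
From mathcomp Require Import reals complex.
From Stdlib Require Import FunctionalExtensionality.
Set Implicit Arguments.
Import GRing.Theory.
Local Open Scope ring_scope.

Section Aux.
Variable R : realType.
Variable V0 : lmodType R[i].

Lemma hpow_decomp (n : nat) (x : hser V0) :
  eqmod n x (hzero V0) -> x = hsmul (hpow R n) (fun k => x (k + n)%N).
Proof.
move=> Hx; apply: functional_extensionality => k; rewrite /hsmul.
case: (leqP n k) => Hnk.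
  have Hn : (n < k.+1)%N by [].
  rewrite (bigD1 (Ordinal Hn)) //= /hpow eqxx scale1r big1 ?addr0.
    by rewrite subnK.
  move=> i /eqP Hi; case: eqP => [E|_]; last by rewrite scale0r.
  by exfalso; apply: Hi; apply: val_inj.
rewrite big1; first by rewrite Hx.
move=> i _; rewrite /hpow; case: eqP => [E|_]; last by rewrite scale0r.
by move: (ltn_ord i); rewrite E ltnS leqNgt Hnk.
Qed.

Lemma hpow_eqmod (n : nat) (w : hser V0) :
  eqmod n (hsmul (hpow R n) w) (hzero V0).
Proof.
move=> k Hk; rewrite /hsmul /hzero big1 // => i _.
rewrite /hpow; case: eqP => [E|_]; last by rewrite scale0r.
by move: (ltn_ord i); rewrite E ltnS leqNgt Hk.
Qed.

Lemma eqmod_split (n : nat) (u u' : hser V0) : eqmod n u u' ->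
  exists w, u = hadd u' (hsmul (hpow R n) w).
Proof.
move=> H.
have Hd : eqmod n (fun k => u k - u' k) (hzero V0).
  by move=> k Hk; rewrite /hzero H // subrr.
exists (fun k => (fun k => u k - u' k) (k + n)%N).
rewrite -(hpow_decomp Hd); apply: functional_extensionality => k.
by rewrite /hadd addrC subrK.
Qed.

Lemma eqmod_hadd n (a b : hser V0) : eqmod n b (hzero V0) ->
  eqmod n (hadd a b) a.
Proof. by move=> H k Hk; rewrite /hadd H // /hzero addr0. Qed.

Lemma eqmod_trans n (a b c : hser V0) : eqmod n a b -> eqmod n b c -> eqmod n a c.
Proof. by move=> H1 H2 k Hk; rewrite H1 // H2. Qed.

Lemma eqmod_sym n (a b : hser V0) : eqmod n a b -> eqmod n b a.
Proof. by move=> H k Hk; rewrite H. Qed.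

End Aux.

Theorem lemma3p17 (R : realType) (V0 : lmodType R[i])
  (vac : hser V0) (Y : vmodes V0) (S : hser V0 -> Prop) :
  is_hNVA vac Y ->
  (forall n : nat, (0 < n)%N -> generates_mod n vac Y S) ->
  forall v : hser V0, hgen vac Y S v.
Proof.
move=> [HY1 [HY2 _]] Hgen v U [[U0 [UD US]] [_ [Ucl [Uvac UY]]]] HS.
apply: Ucl => n.
case: n => [|n].
  by exists (hzero V0); split => // k.
set T := fun x => exists u, U u /\ eqmod n.+1 x u.
have HT : is_subalg_mod n.+1 vac Y T.
  split; [|split; [|split]].
  - move=> a b Hab [u [Uu Hu]]; exists u; split => //.
    exact: eqmod_trans (eqmod_sym Hab) Hu.
  - split; [|split].
    + by exists (hzero V0); split => // k.
    + move=> a b [u [Uu Hu]] [u' [Uu' Hu']]; exists (hadd u u'); split; first exact: UD.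
      by move=> k Hk; rewrite /hadd Hu // Hu'.
    + move=> f a [u [Uu Hu]]; exists (hsmul f u); split; first exact: US.
      move=> k Hk; rewrite /hsmul; apply: eq_bigr => i _; rewrite Hu //.
      exact: leq_ltn_trans (leq_subr _ _) Hk.
  - by exists vac; split => // k.
  - move=> m a b [u [Uu Hu]] [u' [Uu' Hu']]; exists (Y m u u'); split; first exact: UY.
    have [w Ew] := eqmod_split Hu.
    have [w' Ew'] := eqmod_split Hu'.
    rewrite Ew Ew'; apply: eqmod_sym.
    case: (HY1 m (hadd u' (hsmul (hpow R n.+1) w'))) => Ha Hs.
    simpl in Ha, Hs. rewrite Ha Hs.
    case: (HY2 m u) => Ha' Hs'.
    simpl in Ha', Hs'; rewrite Ha' Hs'.
    apply: eqmod_sym.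
    apply: (eqmod_trans (b := hadd (Y m u u') (hsmul (hpow R n.+1) (Y m u w')))).
      exact: (eqmod_hadd _ (hpow_eqmod _ _)).
    exact: (eqmod_hadd _ (hpow_eqmod _ _)).
have Tv := Hgen n.+1 isT T HT (fun s Ss => ex_intro _ s (conj (HS s Ss) (fun k _ => erefl))) v.
case: Tv => u [Uu Hu]; by exists u.
Qed.
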